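(* Let $n\geq 3$ and $m\geq 1$. The matching $\mu$ on the face poset of $\Delta_m^{n,2}$ has no critical cells of dimension $0$ or $1$.
   Context: $\Delta_m^{n,2}=\mathrm{VR}(\{0,\ldots,m\}^n;2)$, where $\{0,\ldots,m\}^n$ carries the Manhattan metric $d(x,y)=\sum_i|x_i-y_i|$ and $\mathrm{VR}(X;r)$ is the complex of finite subsets of diameter $\leq r$. Order the vertices as $v_1\prec v_2\prec\cdots\prec v_N$ ($N=(m+1)^n$) in the anti-lexicographic order ($x\prec y$ iff at the largest index $i$ with $x_i\neq y_i$, $x_i<y_i$). Let $T_0$ be the set of all simplices of $\Delta_m^{n,2}$, including the empty simplex. For $i=1,\ldots,N$ put $S_i=\{\sigma\in T_{i-1}: v_i\notin\sigma,\ \sigma\cup\{v_i\}\in T_{i-1}\}$, $\mu(\sigma)=\sigma\cup\{v_i\}$ for $\sigma\in S_i$, and $T_i=T_{i-1}\setminus(S_i\cup\{\sigma\cup\{v_i\}:\sigma\in S_i\})$. The critical cells of $\mu$ are the simplices in $T_N$; the dimension of a simplex is its cardinality minus one. *)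

(* Defs.v *)
From mathcomp Require Import all_boot.
Set Implicit Arguments. Unset Strict Implicit. Unset Printing Implicit Defensive.

(* Vertices of {0,...,m}^n : functions 'I_n -> 'I_m.+1. *)
Definition vert (n m : nat) := {ffun 'I_n -> 'I_m.+1}.

(* Manhattan distance  sum_i |x_i - y_i|  (on nat: |a-b| = (a-b)+(b-a)). *)
Definition manhattan n m (x y : vert n m) : nat :=
  \sum_(i < n) ((x i - y i) + (y i - x i))%N.

(* Simplices of VR({0..m}^n; 2): finite vertex sets of diameter <= 2
   (the empty set included). *)
Definition is_simplex n m (s : {set vert n m}) : bool :=
  [forall x in s, forall y in s, manhattan x y <= 2].

Definition T0 n m : {set {set vert n m}} := [set s | is_simplex s].

Definition antilex n m (x y : vert n m) : bool :=
  [exists i : 'I_n, (x i < y i) && [forall j : 'I_n, (i < j) ==> (x j == y j)]].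

Definition antilex_le n m (x y : vert n m) : bool := (x == y) || antilex x y.

Definition vert_seq n m : seq (vert n m) := sort (@antilex_le n m) (enum (vert n m)).

Definition S_step n m (v : vert n m) (T : {set {set vert n m}}) : {set {set vert n m}} :=
  [set s in T | (v \notin s) && ((v |: s) \in T)].

Definition T_step n m (T : {set {set vert n m}}) (v : vert n m) : {set {set vert n m}} :=
  T :\: (S_step v T :|: [set v |: s | s in S_step v T]).

(* T_N : the set of critical cells of the matching mu. *)
Definition critical n m : {set {set vert n m}} := foldl (@T_step n m) (T0 n m) (vert_seq n m).

Definition sdim n m (s : {set vert n m}) : nat := #|s|.-1.

(* Main.v *)
Require Import Defs.
From mathcomp Require Import all_boot zify.
Set Implicit Arguments. Unset Strict Implicit. Unset Printing Implicit Defensive.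

Lemma antilex_asym n m (x y : vert n m) : antilex x y -> antilex y x -> False.
Proof.
case/existsP=> i /andP[lt1 /forallP h1]; case/existsP=> j /andP[lt2 /forallP h2].
case: (ltngtP i j) => [ij|ji|/val_inj eij].
- by move: (h1 j); rewrite ij /= => /eqP e; rewrite e ltnn in lt2.
- by move: (h2 i); rewrite ji /= => /eqP e; rewrite e ltnn in lt1.
- subst j; lia.
Qed.

Lemma antilex_trans n m (x y z : vert n m) : antilex x y -> antilex y z -> antilex x z.
Proof.
case/existsP=> i /andP[lt1 /forallP h1]; case/existsP=> j /andP[lt2 /forallP h2].
apply/existsP; case: (ltngtP i j) => [ij|ji|/val_inj eij].
- exists j; move: (h1 j); rewrite ij /= => /eqP ->; rewrite lt2 /=.
  apply/forallP=> k; apply/implyP=> jk; move: (h1 k) (h2 k).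
  by rewrite jk (ltn_trans ij jk) /= => /eqP -> /eqP ->.
- exists i; move: (h2 i); rewrite ji /= => /eqP <-; rewrite lt1 /=.
  apply/forallP=> k; apply/implyP=> ik; move: (h1 k) (h2 k).
  by rewrite ik (ltn_trans ji ik) /= => /eqP -> /eqP ->.
- subst j; exists i; rewrite (ltn_trans lt1 lt2) /=.
  apply/forallP=> k; apply/implyP=> ik; move: (h1 k) (h2 k).
  by rewrite ik /= => /eqP -> /eqP ->.
Qed.

Lemma maxdiff n m (x y : vert n m) : x != y ->
  exists i : 'I_n, (x i != y i) && [forall j : 'I_n, (i < j) ==> (x j == y j)].
Proof.
move=> nxy.
have [i0 Hi0] : exists i0, x i0 != y i0.
  apply/existsP; move: nxy; apply: contraR; rewrite negb_exists => /forallP h.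
  by apply/eqP/ffunP=> i; move: (h i); rewrite negbK => /eqP.
case: (@arg_maxnP _ i0 (fun i => x i != y i) (fun i => nat_of_ord i) Hi0) => i Hi Hmax.
exists i; rewrite Hi /=; apply/forallP=> j; apply/implyP=> ij.
case: eqP => // /eqP Hj; move: (Hmax j Hj); lia.
Qed.

Lemma antilex_total n m (x y : vert n m) : x != y -> antilex x y \/ antilex y x.
Proof.
move=> /maxdiff [i /andP[ne h0]]; have /forallP h := h0.
case: (ltngtP (x i) (y i)) => [lt|gt|/val_inj e]; last by rewrite e eqxx in ne.
- by left; apply/existsP; exists i; rewrite lt h0.
- right; apply/existsP; exists i; rewrite gt /=; apply/forallP=> j.
  by apply/implyP=> ij; move: (h j); rewrite ij /= eq_sym.
Qed.

Lemma antilex_pw n m (w x : vert n m) : (forall i, w i <= x i) -> w != x -> antilex w x.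
Proof.
move=> le /maxdiff [i /andP[ne h]]; apply/existsP; exists i; rewrite h andbT.
by rewrite ltn_neqAle le andbT.
Qed.

Lemma antilex_le_trans n m : transitive (@antilex_le n m).
Proof.
move=> y x z /orP[/eqP->//|xy] /orP[/eqP<-|yz]; rewrite /antilex_le ?xy ?orbT //.
by rewrite (antilex_trans xy yz) orbT.
Qed.

Lemma antilex_le_total n m : total (@antilex_le n m).
Proof.
move=> x y; rewrite /antilex_le /=; case: (eqVneq x y) => [->|ne] /=; first by [].
by case: (antilex_total ne) => ->; rewrite ?orbT.
Qed.

Definition pos n m (x : vert n m) := index x (vert_seq n m).

Lemma mem_vs n m (x : vert n m) : x \in vert_seq n m.
Proof. by rewrite /vert_seq mem_sort mem_enum. Qed.

Lemma pos_lt n m (x y : vert n m) : antilex x y -> pos x < pos y.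
Proof.
move=> xy; rewrite /pos; case: (ltngtP (index x _) (index y _)) => // [yx|e].
- have := @sorted_ltn_index _ _ (@antilex_le_trans n m) (vert_seq n m) (sort_sorted (@antilex_le_total n m) _) y x (mem_vs y) (mem_vs x) yx.
  case/orP=> [/eqP e|yx']; first by subst; case: (antilex_asym xy xy).
  by case: (antilex_asym xy yx').
- have := congr1 (nth x (vert_seq n m)) e; rewrite !nth_index ?mem_vs // => exy.
  by subst; case: (antilex_asym xy xy).
Qed.

Lemma pos_inj n m (x y : vert n m) : pos x = pos y -> x = y.
Proof.
move=> e; have := congr1 (nth x (vert_seq n m)) e; rewrite /pos !nth_index ?mem_vs //.
Qed.

Lemma T_step_sub n m (T : {set {set vert n m}}) v : T_step T v \subset T.
Proof. exact: subsetDl. Qed.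

Lemma fold_sub n m q (T : {set {set vert n m}}) : foldl (@T_step n m) T q \subset T.
Proof.
elim: q T => [|v q IH] T /=; first exact: subxx.
exact: subset_trans (IH _) (T_step_sub _ _).
Qed.

Lemma P1 n m (C : {set vert n m}) (q : seq (vert n m)) (T : {set {set vert n m}}) : C \in T -> (forall w, w \in q -> w \notin C) ->
  (forall w, w \in q -> w |: C \notin T) -> C \in foldl (@T_step n m) T q.
Proof.
elim: q T => [|v q IH] T //= CT Hq HT.
apply: IH.
- rewrite /T_step inE CT andbT inE negb_or; apply/andP; split.
  + by rewrite /S_step inE (negbTE (HT v (mem_head _ _))) !andbF.
  + apply/imsetP; case=> s0 _ e; move: (Hq v (mem_head _ _)).
    by rewrite e setU11.
- by move=> w wq; apply: Hq; rewrite inE wq orbT.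
- move=> w wq; have wq' : w \in v :: q by rewrite inE wq orbT.
  apply: contra (HT w wq'); exact/(subsetP (T_step_sub _ _)).
Qed.

Lemma step_removes n m (T : {set {set vert n m}}) z B : B \in T -> z \notin B -> z |: B \in T ->
  B \notin T_step T z /\ z |: B \notin T_step T z.
Proof.
move=> BT zB zBT; have BS : B \in S_step z T by rewrite inE BT zB zBT.
split; rewrite /T_step in_setD negb_and negbK in_setU.
- by rewrite BS.
- by apply/orP; left; apply/orP; right; apply/imsetP; exists B.
Qed.

Lemma simplex_sub n m (A B : {set vert n m}) : A \subset B -> is_simplex B -> is_simplex A.
Proof.
move=> AB /forallP h; apply/forallP=> x; apply/implyP=> xA; apply/forallP=> y; apply/implyP=> yA.
have /implyP := h x; move=> /(_ (subsetP AB _ xA)) /forallP /(_ y) /implyP; apply.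
exact: subsetP AB _ yA.
Qed.

Lemma scheme n m (z : vert n m) (B : {set vert n m}) : z \notin B -> z |: B \in T0 n m ->
  (forall b, b \in B -> pos z < pos b) ->
  (forall w, pos w < pos z -> w |: B \notin T0 n m) ->
  B \notin critical n m /\ z |: B \notin critical n m.
Proof.
move=> zB zBK Hpos Hw.
have BK : B \in T0 n m.
  by move: zBK; rewrite !inE; apply: simplex_sub; apply: subsetUr.
pose s := vert_seq n m; pose k := pos z.
have es : s = take k s ++ z :: drop k.+1 s.
  by rewrite -{1}(cat_take_drop k s) (drop_nth z) ?index_mem ?mem_vs // nth_index ?mem_vs.
have Hp : forall w, w \in take k s -> pos w < pos z by move=> w /index_ltn.
have notB : forall w, w \in take k s -> w \notin B.
  by move=> w /Hp wz; apply/negP=> /Hpos; lia.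
have nz : forall w, w \in take k s -> w \notin z |: B.
  move=> w wp; rewrite in_setU1 negb_or (notB w wp) andbT.
  by apply/negP=> /eqP e; move: (Hp w wp); rewrite e ltnn.
have nzK : forall w, w \in take k s -> w |: (z |: B) \notin T0 n m.
  move=> w wp; apply: contra (Hw w (Hp w wp)); rewrite !inE; apply: simplex_sub.
  by apply/subsetP=> u; rewrite !inE; case/orP=> ->; rewrite ?orbT.
have [h1 h2] := @step_removes n m (foldl (@T_step n m) (T0 n m) (take k s)) z B
  (P1 BK notB (fun w wp => Hw w (Hp w wp))) zB (P1 zBK nz nzK).
rewrite /critical -/s es foldl_cat /=; split; apply/negP=> /(subsetP (fold_sub _ _)).
  by rewrite (negbTE h1).
by rewrite (negbTE h2).
Qed.

Lemma sum_ind n (k : 'I_n) : \sum_(j < n) ((j == k) : nat) = 1.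
Proof. by rewrite (bigD1 k) //= eqxx big1 // => j /negbTE ->. Qed.

Lemma man_le n m (x y : vert n m) (f : 'I_n -> nat) :
  (forall j, (x j - y j) + (y j - x j) <= f j) -> manhattan x y <= \sum_(j < n) f j.
Proof. by move=> h; apply: leq_sum => j _; apply: h. Qed.

Lemma man_ge n m (x y : vert n m) (f : 'I_n -> nat) :
  (forall j, f j <= (x j - y j) + (y j - x j)) -> \sum_(j < n) f j <= manhattan x y.
Proof. by move=> h; apply: leq_sum => j _; apply: h. Qed.

Definition zerov n m : vert n m := [ffun _ => ord0].

Lemma zero_min n m (y : vert n m) : y != zerov n m -> antilex (zerov n m) y.
Proof. by move=> ne; apply: antilex_pw; [move=> i; rewrite ffunE | rewrite eq_sym]. Qed.

Definition decv n m (x : vert n m) (k : 'I_n) : vert n m :=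
  [ffun j => if j == k then inord (x k).-1 else x j].

Lemma decv_k n m (x : vert n m) k : (decv x k k : nat) = (x k).-1.
Proof. rewrite ffunE eqxx inordK //; have := ltn_ord (x k); lia. Qed.

Lemma decv_lt n m (x : vert n m) k : 0 < x k -> antilex (decv x k) x.
Proof.
move=> pos; apply/existsP; exists k; rewrite decv_k; apply/andP; split; first lia.
apply/forallP=> j; apply/implyP=> kj; rewrite ffunE.
by have -> : (j == k) = false by apply/negP=> /eqP e; rewrite e ltnn in kj.
Qed.

Lemma decv_dist n m (x y : vert n m) k j : 0 < x k ->
  (decv x k j - y j) + (y j - decv x k j) <= (x j - y j) + (y j - x j) + (j == k).
Proof.
move=> pos; case: (eqVneq j k) => [->|ne]; first by rewrite decv_k; lia.
by rewrite ffunE (negbTE ne) addn0.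
Qed.

Lemma decv_distx n m (x : vert n m) k j : 0 < x k ->
  (decv x k j - x j) + (x j - decv x k j) <= (j == k).
Proof.
move=> pos; case: (eqVneq j k) => [->|ne]; first by rewrite decv_k; lia.
by rewrite ffunE (negbTE ne) subnn.
Qed.

Lemma vertex_nb n m (y : vert n m) : y != zerov n m ->
  exists w, antilex w y /\ manhattan w y <= 2.
Proof.
move=> ne.
have [k pk] : exists k, 0 < y k.
  apply/existsP; move: ne; apply: contraR; rewrite negb_exists => /forallP h.
  by apply/eqP/ffunP=> i; rewrite ffunE; apply/val_inj; move: (h i); rewrite /=; lia.
exists (decv y k); split; first exact: decv_lt.
apply: leq_trans (man_le (f := fun j => (j == k) : nat) _) _.
  by move=> j; apply: decv_distx.
by rewrite sum_ind.
Qed.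

Definition minv n m (x y : vert n m) : vert n m :=
  [ffun j => if x j <= y j then x j else y j].

Definition incdec n m (x : vert n m) (i k : 'I_n) : vert n m :=
  [ffun j => if j == i then inord (x i).+1 else if j == k then inord (x k).-1 else x j].

Lemma edge_nb n m (x y w : vert n m) : antilex x y -> manhattan x y <= 2 ->
  antilex w x -> manhattan w y <= 2 ->
  exists w', [/\ antilex w' x, manhattan w' x <= 2 & manhattan w' y <= 2].
Proof.
move=> xy dxy wx dwy.
have nxy : x != y by apply/negP=> /eqP e; subst; case: (antilex_asym xy xy).
case: (eqVneq (minv x y) x) => [emin|nmin]; last first.
  have hsum : manhattan (minv x y) x + manhattan (minv x y) y = manhattan x y.
    rewrite /manhattan -big_split /=; apply: eq_bigr => j _; rewrite ffunE.
    case: leqP; lia.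
  exists (minv x y); split; [|lia|lia].
  by apply: antilex_pw => // j; rewrite ffunE; case: (leqP (x j) (y j)) => //; lia.
have xley : forall j, x j <= y j.
  by move=> j; have := congr1 (fun f : vert n m => nat_of_ord (f j)) emin; rewrite /= ffunE; case: (leqP (x j) (y j)) => //; lia.
case: (boolP [exists i : 'I_n, exists k : 'I_n, [&& i < k, x i < y i & 0 < x k]]) => [/existsP[i /existsP[k /and3P[ik xyi pk]]]|n2a].
  have ine : (k == i) = false by apply/negP=> /eqP e; subst; rewrite ltnn in ik.
  have ine' : (i == k) = false by rewrite eq_sym.
  have wi : (incdec x i k i : nat) = (x i).+1.
    by rewrite ffunE eqxx inordK //; have := ltn_ord (y i); lia.
  have wk : (incdec x i k k : nat) = (x k).-1.
    by rewrite ffunE ine eqxx inordK //; have := ltn_ord (x k); lia.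
  have wj : forall j, j != i -> j != k -> incdec x i k j = x j.
    by move=> j /negbTE a /negbTE b; rewrite ffunE a b.
  exists (incdec x i k); split.
  - apply/existsP; exists k; rewrite wk; apply/andP; split; first lia.
    apply/forallP=> j; apply/implyP=> kj; rewrite wj //.
      by apply/negP=> /eqP e; subst; move: (ltn_trans ik kj); rewrite ltnn.
    by apply/negP=> /eqP e; subst; rewrite ltnn in kj.
  - apply: leq_trans (man_le (f := fun j => ((j == i) : nat) + (j == k)) _) _.
      move=> j; case: (eqVneq j i) => [->|ni]; first by rewrite wi ine'; lia.
      case: (eqVneq j k) => [->|nk]; first by rewrite wk; lia.
      by rewrite wj // subnn.
    by rewrite big_split /= !sum_ind.
  - have : manhattan (incdec x i k) y + 1 <= manhattan x y + 1.
      rewrite -{1}(sum_ind i) -(sum_ind k) /manhattan -!big_split /=.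
      apply: leq_sum => j _.
      case: (eqVneq j i) => [->|ni]; first by rewrite wi ine'; have := xley i; lia.
      case: (eqVneq j k) => [->|nk]; first by rewrite wk; have := xley k; lia.
      by rewrite wj.
    lia.
case: (boolP ([exists k : 'I_n, 0 < x k] && (manhattan x y == 1))) => [/andP[/existsP[k pk] /eqP d1]|n2b].
  exists (decv x k); split; first exact: decv_lt.
    apply: leq_trans (man_le (f := fun j => (j == k) : nat) _) _.
      by move=> j; apply: decv_distx.
    by rewrite sum_ind.
  have : manhattan (decv x k) y <= manhattan x y + 1.
    rewrite -(sum_ind k) /manhattan -big_split /=; apply: leq_sum => j _.
    exact: decv_dist.
  lia.
exfalso.
case/existsP: wx => h /andP[wxh /forallP wh].
have n2a' : forall i : 'I_n, i < h -> x i = y i.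
  move=> i ih; apply/val_inj/eqP; rewrite eqn_leq xley /= leqNgt; apply/negP=> lt.
  move/negP: n2a; apply; apply/existsP; exists i; apply/existsP; exists h.
  by rewrite ih lt /=; lia.
have d1 : manhattan x y != 1.
  apply/negP=> /eqP d1; move/negP: n2b; apply; rewrite d1 eqxx andbT.
  by apply/existsP; exists h; lia.
have d0 : 1 <= manhattan x y.
  have [j0 /andP[ne _]] := maxdiff nxy.
  apply: leq_trans (man_ge (f := fun j => (j == j0) : nat) _); first by rewrite sum_ind.
  move=> j; case: (eqVneq j j0) => [->|//]; move: ne; rewrite -(inj_eq val_inj) /=; lia.
have : manhattan x y + 1 <= manhattan w y.
  rewrite -(sum_ind h) /manhattan -big_split /=; apply: leq_sum => j _.
  case: (ltngtP j h) => [jh|hj|/val_inj ->].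
  - have -> : (j == h) = false by apply/negP=> /eqP e; subst; rewrite ltnn in jh.
    by rewrite n2a' // subnn.
  - have /eqP -> := implyP (wh j) hj.
    have -> : (j == h) = false by apply/negP=> /eqP e; subst; rewrite ltnn in hj.
    lia.
  - by rewrite eqxx; have := xley h; lia.
lia.
Qed.

Lemma man_xx n m (x : vert n m) : manhattan x x = 0.
Proof. by rewrite /manhattan big1 // => i _; rewrite subnn. Qed.

Lemma man_sym n m (x y : vert n m) : manhattan x y = manhattan y x.
Proof. by rewrite /manhattan; apply: eq_bigr => i _; rewrite addnC. Qed.

Lemma simplexP n m (S : {set vert n m}) :
  reflect (forall a b, a \in S -> b \in S -> manhattan a b <= 2) (is_simplex S).
Proof.
apply: (iffP forallP) => h.
- by move=> a b aS bS; move: (h a); rewrite aS /= => /forallP /(_ b); rewrite bS.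
- by move=> a; apply/implyP=> aS; apply/forallP=> b; apply/implyP=> bS; apply: h.
Qed.

Lemma triple_T0 n m (z x y : vert n m) : manhattan z x <= 2 -> manhattan z y <= 2 ->
  manhattan x y <= 2 -> z |: [set x; y] \in T0 n m.
Proof.
move=> h1 h2 h3; rewrite inE; apply/simplexP=> a b.
rewrite !inE => /orP[/eqP->|/orP[/eqP->|/eqP->]] /orP[/eqP->|/orP[/eqP->|/eqP->]];
  by rewrite ?man_xx // man_sym.
Qed.

Lemma pos_antilex n m (w x : vert n m) : pos w < pos x -> antilex w x.
Proof.
move=> lt; have nwx : w != x by apply/negP=> /eqP e; subst; rewrite ltnn in lt.
case: (antilex_total nwx) => // /pos_lt; lia.
Qed.

Lemma antilex_irr n m (x : vert n m) : ~~ antilex x x.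
Proof. by apply/negP=> h; case: (antilex_asym h h). Qed.

Lemma edge_case n m (x y : vert n m) : antilex x y -> manhattan x y <= 2 ->
  [set x; y] \notin critical n m.
Proof.
move=> xy dxy.
have pxy := pos_lt xy.
have nxy : x != y by apply/negP=> /eqP e; subst; rewrite (negbTE (antilex_irr _)) in xy.
case: (boolP [exists w, antilex w x && (manhattan w y <= 2)]) => [/existsP[w /andP[wx dwy]]|nex].
  have [w' [w'x dw'x dw'y]] := edge_nb xy dxy wx dwy.
  pose Q v := [&& v != x, v != y, manhattan v x <= 2 & manhattan v y <= 2].
  have Qw' : Q w'.
    rewrite /Q dw'x dw'y !andbT; apply/andP; split; apply/negP=> /eqP e; subst.
      by rewrite (negbTE (antilex_irr _)) in w'x.
    by case: (antilex_asym w'x xy).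
  case: (@arg_minnP _ w' Q (@pos n m) Qw') => z Qz zmin.
  have pz : pos z < pos x by apply: leq_ltn_trans (zmin _ Qw') (pos_lt w'x).
  case/and4P: Qz => zx zy dzx dzy.
  apply: (proj1 (scheme (z := z) _ _ _ _)).
  - by rewrite !inE negb_or zx zy.
  - by apply: triple_T0 => //; rewrite man_sym.
  - by move=> b; rewrite !inE => /orP[] /eqP ->; lia.
  - move=> v pv; apply/negP; rewrite inE => /simplexP h.
    have hx := h v x; have hy := h v y.
    rewrite !inE !eqxx ?orbT /= in hx hy.
    have := zmin v; rewrite /Q hx ?hy //.
    have -> : v != x by apply/negP=> /eqP e; subst; lia.
    have -> : v != y by apply/negP=> /eqP e; subst; lia.
    by move=> /(_ isT); lia.
have := proj2 (@scheme n m x [set y] _ _ _ _); apply.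
- by rewrite inE.
- rewrite inE; apply/simplexP=> a b; rewrite !inE => /orP[] /eqP -> /orP[] /eqP ->;
  by rewrite ?man_xx // man_sym.
- by move=> b; rewrite inE => /eqP ->.
- move=> w pw; apply/negP; rewrite inE => /simplexP h.
  have := h w y; rewrite !inE !eqxx orbT => /(_ isT isT) dwy.
  by move/negP: nex; apply; apply/existsP; exists w; rewrite dwy (pos_antilex pw).
Qed.

Lemma crit_T0 n m (s : {set vert n m}) : s \in critical n m -> s \in T0 n m.
Proof. exact: (subsetP (fold_sub _ _)). Qed.

Theorem lemma4p8 (n m : nat) : 3 <= n -> 1 <= m ->
  forall s : {set vert n m}, s \in critical n m -> #|s| != 1 /\ #|s| != 2.
Proof.
move=> _ _ s sc; split.
- apply/negP=> /cards1P [y e]; subst s.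
  case: (eqVneq y (zerov n m)) => [ey|ny].
    subst y; move: sc; rewrite -(setU0 [set zerov n m]).
    apply/negP; apply: (proj2 (scheme _ _ _ _)).
    + by rewrite inE.
    + by rewrite setU0 inE; apply/simplexP=> a b; rewrite !inE => /eqP -> /eqP ->; rewrite man_xx.
    + by move=> b; rewrite inE.
    + move=> w pw; exfalso; case: (eqVneq w (zerov n m)) => [e|ne].
        by subst; rewrite ltnn in pw.
      by have := pos_lt (zero_min ne); lia.
  have [w0 [w0y dw0]] := vertex_nb ny.
  pose Q v := (v != y) && (manhattan v y <= 2).
  have Qw0 : Q w0.
    by rewrite /Q dw0 andbT; apply/negP=> /eqP e; subst; rewrite (negbTE (antilex_irr _)) in w0y.
  case: (@arg_minnP _ w0 Q (@pos n m) Qw0) => z /andP[zy dzy] zmin.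
  have pz : pos z < pos y by apply: leq_ltn_trans (zmin _ Qw0) (pos_lt w0y).
  move: sc; apply/negP; apply: (proj1 (@scheme n m z [set y] _ _ _ _)).
  + by rewrite inE.
  + rewrite inE; apply/simplexP=> a b; rewrite !inE => /orP[] /eqP -> /orP[] /eqP ->;
    by rewrite ?man_xx // man_sym.
  + by move=> b; rewrite inE => /eqP ->.
  + move=> w pw; apply/negP; rewrite inE => /simplexP h.
    have := h w y; rewrite !inE !eqxx orbT => /(_ isT isT) dwy.
    have wy : w != y by apply/negP=> /eqP e; subst; lia.
    have := zmin w; rewrite /Q wy dwy => /(_ isT); lia.
- apply/negP=> /cards2P [x [y [nxy e]]]; subst s.
  have := crit_T0 sc; rewrite inE => /simplexP h.
  have dxy : manhattan x y <= 2 by apply: h; rewrite !inE eqxx ?orbT.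
  case: (antilex_total nxy) => [xy|yx].
    by move: sc; apply/negP; apply: edge_case.
  rewrite setUC in sc. 
  move: sc; apply/negP; apply: edge_case yx _; by rewrite man_sym.
Qed.
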